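(* Every finite graph $G$ with pathwidth $p$ is homomorphic to an interval graph $H$ with $\omega(H)\leq p+1$ and $\mathrm{FF}(G)\leq \mathrm{FF}(H)$.
   Context: A path decomposition of a graph $G$ is a sequence $B_1,\dots,B_m$ of vertex subsets such that each vertex lies in a nonempty set of consecutive $B_i$'s and each edge has both endpoints in some $B_i$; its width is $\max_i |B_i|-1$, and the pathwidth of $G$ is the minimum width of a path decomposition. An interval graph is the intersection graph of a finite set of closed real intervals. $\omega(H)$ is the maximum size of a clique in $H$. A First-Fit coloring of a graph $G$ is a proper coloring of the vertices with positive integers such that every vertex colored $i\geq 2$ has a neighbor colored $j$ for every $j\in\{1,\dots,i-1\}$; $\mathrm{FF}(G)$ is the maximum number of colors used in a First-Fit coloring of $G$. A homomorphism from $G$ to $H$ is a map $f:V(G)\to V(H)$ with $f(u)f(v)\in E(H)$ for every edge $uv\in E(G)$. *)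

(* Defs.v *)
From HB Require Import structures.
From mathcomp Require Import all_boot all_order all_algebra.
From mathcomp Require Import boolp reals.
Set Implicit Arguments. Unset Strict Implicit. Unset Printing Implicit Defensive.
Import Order.TTheory GRing.Theory Num.Theory.

Definition simple_graph (T : finType) (e : rel T) : Prop :=
  symmetric e /\ irreflexive e.

Definition path_decomposition (T : finType) (e : rel T) (s : seq {set T}) : Prop :=
  (forall v : T, exists i j : nat,
      [/\ i <= j, j < size s &
          forall k : nat, k < size s -> (v \in nth set0 s k) = (i <= k <= j)]) /\
  (forall u v : T, e u v -> exists2 B, B \in s & (u \in B) && (v \in B)).

Definition pd_width (T : finType) (s : seq {set T}) : nat :=
  (\max_(B <- s) #|B|) - 1.

Definition is_pathwidth (T : finType) (e : rel T) (p : nat) : Prop :=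
  (exists2 s, path_decomposition e s & pd_width s = p) /\
  (forall s, path_decomposition e s -> p <= pd_width s).

(* Interval graph: intersection graph of closed real intervals [l u, r u]. *)
Definition interval_graph (R : realType) (U : finType) (h : rel U) : Prop :=
  exists l r : U -> R,
    (forall u, (l u <= r u)%R) /\
    (forall u v, h u v = (u != v) && ((l u <= r v)%R && (l v <= r u)%R)).

Definition is_clique (U : finType) (h : rel U) (K : {set U}) : bool :=
  [forall x in K, forall y in K, (x != y) ==> h x y].

Definition clique_number (U : finType) (h : rel U) : nat :=
  \max_(K : {set U} | is_clique h K) #|K|.

Definition first_fit (T : finType) (e : rel T) (c : T -> nat) : Prop :=
  (forall u v, e u v -> c u != c v) /\
  (forall v, 0 < c v) /\
  (forall v j, 1 <= j < c v -> exists u, e v u /\ c u = j).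

Definition num_colors (T : finType) (c : T -> nat) : nat :=
  size (undup [seq c v | v <- enum T]).

(* FF(G): maximum number of colors used by a First-Fit coloring.  The number
   of colors used is at most #|T|, so the maximum ranges over k <= #|T|. *)
Definition FF (T : finType) (e : rel T) : nat :=
  \max_(k < #|T|.+1 | `[< exists c : T -> nat, first_fit e c /\ num_colors c = k >]) k.

Definition graph_hom (T U : finType) (e : rel T) (h : rel U) (f : T -> U) : Prop :=
  forall u v, e u v -> h (f u) (f v).

(* Main.v *)
Require Import Defs.
From mathcomp Require Import all_boot all_order all_algebra.
From mathcomp Require Import boolp reals.
From mathcomp Require Import zify.
Set Implicit Arguments. Unset Strict Implicit. Unset Printing Implicit Defensive.

Definition cov (T : finType) (s : seq {set T}) (c : T -> nat) (i t : nat) : bool :=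
  [exists v, (c v == i) && (v \in nth set0 s t)].
Definition covr (T : finType) (s : seq {set T}) (c : T -> nat) (i a b : nat) : bool :=
  [forall x : 'I_(size s), (a <= x <= b) ==> cov s c i x].
Definition rend (T : finType) (s : seq {set T}) (c : T -> nat) (i a : nat) : nat :=
  \max_(e < size s | covr s c i a e) (e : nat).
Definition Lst (T : finType) (s : seq {set T}) (c : T -> nat) (i t : nat) : nat :=
  t - \max_(d < t.+1 | covr s c i (t - d) t) (d : nat).
Definition isstart (T : finType) (s : seq {set T}) (c : T -> nat) (i a : nat) : bool :=
  (a == 0) || ~~ cov s c i a.-1.

Lemma nth_big (T : finType) (s : seq {set T}) (v : T) t :
  v \in nth set0 s t -> t < size s.
Proof. by case: ltnP => // H; rewrite nth_default // in_set0. Qed.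

Lemma cov_lt (T : finType) (s : seq {set T}) c i t : cov s c i t -> t < size s.
Proof. by case/existsP=> v /andP[_ /nth_big]. Qed.

Lemma covrP (T : finType) (s : seq {set T}) c i a b x :
  covr s c i a b -> a <= x <= b -> x < size s -> cov s c i x.
Proof. by move=> /forallP H Hx Hs; have := H (Ordinal Hs); rewrite /= Hx. Qed.

Lemma covrI (T : finType) (s : seq {set T}) c i a b :
  (forall x, a <= x <= b -> x < size s -> cov s c i x) -> covr s c i a b.
Proof. by move=> H; apply/forallP=> x; apply/implyP=> Hx; apply: H. Qed.

Lemma covr_mono (T : finType) (s : seq {set T}) c i a b b' :
  covr s c i a b -> b' <= b -> covr s c i a b'.
Proof.
move=> H Hb; apply: covrI=> x Hx Hs; apply: (covrP H) => //.
case/andP: Hx => H1 H2; rewrite H1 /=; exact: leq_trans H2 Hb.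
Qed.

Lemma rend_ge (T : finType) (s : seq {set T}) c i a :
  cov s c i a -> a <= rend s c i a.
Proof.
move=> Ha; have Hs := cov_lt Ha.
rewrite /rend; apply: (@leq_bigmax_cond _ _ (fun e : 'I_(size s) => nat_of_ord e) (Ordinal Hs)).
apply: covrI => x /= Hx _; have -> : x = a by lia. done.
Qed.

Lemma rend_lt (T : finType) (s : seq {set T}) c i a :
  0 < size s -> rend s c i a < size s.
Proof.
move=> Hs; rewrite /rend; have: \max_(e < size s | covr s c i a e) (e : nat) <= (size s).-1.
  by apply/bigmax_leqP => e _; have := ltn_ord e; lia.
lia.
Qed.

Lemma run_contains (T : finType) (s : seq {set T}) c i a t :
  cov s c i a -> t < size s -> (a <= t <= rend s c i a) = (a <= t) && covr s c i a t.
Proof.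
move=> Ha Ht; have Hs := cov_lt Ha.
apply/idP/idP.
- case/andP=> H1 H2; rewrite H1 /=.
  have Hne : 0 < #|[pred e : 'I_(size s) | covr s c i a e]|.
    apply/card_gt0P; exists (Ordinal Hs); rewrite inE.
    apply: covrI => x /= Hx _; have -> : x = a by lia. done.
  have [e0 He0 Heq] := eq_bigmax_cond (fun e : 'I_(size s) => nat_of_ord e) Hne.
  rewrite inE in He0; apply: (covr_mono He0).
  move: H2; rewrite /rend.
  have -> : \max_(e < size s | covr s c i a e) (e : nat) = \max_(e in [pred e : 'I_(size s) | covr s c i a e]) (e : nat).
    by apply: eq_bigl => e; rewrite inE.
  by rewrite Heq.
- case/andP=> H1 H2; rewrite H1 /=.
  rewrite /rend; exact: (@leq_bigmax_cond _ _ (fun e : 'I_(size s) => nat_of_ord e) (Ordinal Ht)).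
Qed.

Lemma start_uniq (T : finType) (s : seq {set T}) c i a a' t :
  isstart s c i a -> isstart s c i a' -> t < size s ->
  a <= t -> covr s c i a t -> a' <= t -> covr s c i a' t -> a = a'.
Proof.
have key : forall a a', isstart s c i a' -> t < size s -> a < a' -> a' <= t ->
   covr s c i a t -> False.
  move=> x y Hy Ht Hxy Hyt Hc; move: Hy; rewrite /isstart.
  have -> : (y == 0) = false by apply/eqP; lia.
  rewrite /= (covrP Hc) //; lia.
move=> Ha Ha' Ht H1 H2 H3 H4.
case: (ltngtP a a') => // Hlt; first by case: (key a a').
by case: (key a' a).
Qed.

Lemma Lst_prop (T : finType) (s : seq {set T}) c i t :
  cov s c i t ->
  [/\ Lst s c i t <= t, covr s c i (Lst s c i t) t & isstart s c i (Lst s c i t)].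
Proof.
move=> Ht; have Hs := cov_lt Ht.
have Hne : 0 < #|[pred d : 'I_t.+1 | covr s c i (t - d) t]|.
  apply/card_gt0P; exists ord0; rewrite inE /= subn0.
  apply: covrI => x Hx _; have -> : x = t by lia. done.
have [d0 Hd0 Heq] := eq_bigmax_cond (fun d : 'I_t.+1 => nat_of_ord d) Hne.
have HL : Lst s c i t = t - d0.
  rewrite /Lst -Heq; congr (_ - _); by apply: eq_bigl => d; rewrite inE.
rewrite inE /= in Hd0.
rewrite HL; split; [lia | done | ].
rewrite /isstart; case: (boolP (t - d0 == 0)) => //= Hnz.
apply/negP => Hc.
have Hd1 : d0.+1 < t.+1 by lia.
have Hcov : covr s c i (t - d0.+1) t.
  apply: covrI => x Hx Hxs.
  case: (ltnP x (t - d0)) => Hx2.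
    have -> : x = (t - d0).-1 by lia. done.
  apply: (covrP Hd0) => //; lia.
have := @leq_bigmax_cond _ [pred d : 'I_t.+1 | covr s c i (t - d) t] (fun d : 'I_t.+1 => nat_of_ord d) (Ordinal Hd1).
rewrite inE /= Hcov => /(_ isT).
rewrite Heq /=; lia.
Qed.

Lemma consec (T : finType) (e : rel T) (s : seq {set T}) :
  path_decomposition e s -> forall v t1 t2 x,
  v \in nth set0 s t1 -> v \in nth set0 s t2 -> t1 <= x <= t2 -> v \in nth set0 s x.
Proof.
case=> Hc _ v t1 t2 x H1 H2 Hx.
have Hs1 := nth_big H1; have Hs2 := nth_big H2.
have [i [j [Hij Hj Hk]]] := Hc v.
rewrite (Hk _ Hs1) in H1; rewrite (Hk _ Hs2) in H2.
have Hxs : x < size s by lia.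
rewrite (Hk _ Hxs); lia.
Qed.

Import Order.TTheory GRing.Theory Num.Theory.

Lemma build (R : realType) (T : finType) (e : rel T) (s : seq {set T}) (c : T -> nat) :
  path_decomposition e s -> (forall u v, e u v -> c u != c v) ->
  exists (U : finType) (h : rel U) (f : T -> U) (cH : U -> nat),
   [/\ interval_graph R h, graph_hom e h f, clique_number h <= \max_(B <- s) #|B|,
       num_colors cH = num_colors c & (first_fit e c -> first_fit h cH)].
Proof.
move=> Hpd Hprop.
pose K := (\max_v c v).+1.
pose M := size s.
pose valid := fun x : 'I_K * 'I_M => cov s c x.1 x.2 && isstart s c x.1 x.2.
pose U := {x : 'I_K * 'I_M | valid x}.
pose lN (u : U) : nat := (val u).2.
pose rN (u : U) : nat := rend s c (val u).1 (val u).2.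
pose col (u : U) : nat := (val u).1.
pose h : rel U := fun u w => (u != w) && ((lN u <= rN w) && (lN w <= rN u)).
pose ct (u : U) t := lN u <= t <= rN u.
have Hcovu : forall u, cov s c (col u) (lN u) by move=> u; case/andP: (valP u).
have Hstu : forall u, isstart s c (col u) (lN u) by move=> u; case/andP: (valP u).
have HrN : forall u, rN u < M.
  move=> u; apply: rend_lt; have := ltn_ord (val u).2; rewrite /M; lia.
have Hct : forall u t, t < M -> ct u t = (lN u <= t) && covr s c (col u) (lN u) t.
  by move=> u t Ht; rewrite /ct /rN (run_contains (Hcovu u) Ht).
have Hctlt : forall u t, ct u t -> t < M.
  move=> u t /andP[_ H]; exact: leq_ltn_trans H (HrN u).
have Huniq : forall u w t, col u = col w -> ct u t -> ct w t -> u = w.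
  move=> u w t Hc Hu Hw; have Ht := Hctlt _ _ Hu.
  move: Hu Hw; rewrite !Hct // => /andP[H1 H2] /andP[H3 H4].
  rewrite -Hc in H3 H4.
  have Hsw : isstart s c (col u) (lN w) by rewrite Hc; exact: Hstu w.
  have Heq := start_uniq (Hstu u) Hsw Ht H1 H2 H3 H4.
  apply: val_inj; move: Hc Heq; rewrite /col /lN.
  case: (val u) => [i a]; case: (val w) => [j b] /= Hc Heq.
  by congr pair; apply: val_inj.
have Ht0 : forall v, exists t : 'I_M, v \in nth set0 s t.
  move=> v; case: Hpd => Hc _; have [i [j [Hij Hj Hk]]] := Hc v.
  have Hi : i < M by rewrite /M; lia.
  by exists (Ordinal Hi); rewrite (Hk _ Hi) /=; lia.
pose t0 v : nat := odflt 0 (omap val [pick t : 'I_M | v \in nth set0 s t]).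
have Ht0v : forall v, v \in nth set0 s (t0 v).
  move=> v; rewrite /t0; case: pickP => [t //|Hn].
  by have [t Ht] := Ht0 v; rewrite Hn in Ht.
have Hcov0 : forall v, cov s c (c v) (t0 v).
  by move=> v; apply/existsP; exists v; rewrite eqxx Ht0v.
have HLlt : forall v, Lst s c (c v) (t0 v) < M.
  move=> v; have [H1 _ _] := Lst_prop (Hcov0 v); have := nth_big (Ht0v v); rewrite /M; lia.
have HcK : forall v, c v < K by move=> v; rewrite ltnS; exact: (leq_bigmax v).
pose f0 v : 'I_K * 'I_M := (inord (c v), Ordinal (HLlt v)).
have Hf0c : forall v, ((f0 v).1 : nat) = c v by move=> v; rewrite /= inordK.
have Hval : forall v, valid (f0 v).
  move=> v; have [H1 H2 H3] := Lst_prop (Hcov0 v).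
  rewrite /valid Hf0c /= H3 andbT; apply: (covrP H2).
    by rewrite leqnn H1.
  exact: (HLlt v).
pose f (v : T) : U := Sub (f0 v) (Hval v).
have Hcolf : forall v, col (f v) = c v by move=> v; rewrite /col SubK Hf0c.
have HlNf : forall v, lN (f v) = Lst s c (c v) (t0 v) by move=> v; rewrite /lN SubK.
have HlNr : forall u, lN u <= rN u by move=> u; exact: rend_ge (Hcovu u).
have Hfct : forall v t, v \in nth set0 s t -> ct (f v) t.
  move=> v t Hv; have Ht := nth_big Hv.
  rewrite Hct // HlNf Hcolf.
  have [H1 H2 H3] := Lst_prop (Hcov0 v).
  move: H1 H2 H3; set L := Lst s c (c v) (t0 v) => H1 H2 H3.
  case: (leqP (t0 v) t) => Hle.
    apply/andP; split; first lia.
    apply: covrI => x Hx Hxs; case: (leqP x (t0 v)) => Hx2.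
      apply: (covrP H2) => //; lia.
    apply/existsP; exists v; rewrite eqxx /=; apply: (consec Hpd (Ht0v v) Hv); lia.
  have HLt : L <= t.
    case: (leqP L t) => // Hlt; move: H3; rewrite /isstart.
    have -> : (L == 0) = false by apply/eqP; lia.
    rewrite /= => /negP; case.
    apply/existsP; exists v; rewrite eqxx /=; apply: (consec Hpd Hv (Ht0v v)); lia.
  rewrite HLt /=; apply: covr_mono H2 _; lia.
have Hhom : graph_hom e h f.
  move=> u v Huv; have [B HB /andP[Hu Hv]] := (proj2 Hpd) u v Huv.
  have HBt : nth set0 s (index B s) = B := nth_index set0 HB.
  rewrite -HBt in Hu Hv.
  have := Hfct _ _ Hu; have := Hfct _ _ Hv; rewrite /h /ct.
  have Hne : f u != f v.
    apply/negP => /eqP E; have := Hprop _ _ Huv.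
    by rewrite -(Hcolf u) -(Hcolf v) E eqxx.
  move=> /andP[H1 H2] /andP[H3 H4]; rewrite Hne /=; apply/andP; split; lia.
have Hcovt : forall u t, ct u t -> cov s c (col u) t.
  move=> u t Hu; have Ht := Hctlt _ _ Hu; move: Hu; rewrite Hct // => /andP[H1 H2].
  by apply: (covrP H2) => //; rewrite H1 leqnn.
exists U, h, f, col; split.
- exists (fun u => ((lN u)%:R)%R), (fun u => ((rN u)%:R)%R); split.
    by move=> u; rewrite ler_nat.
  by move=> u w; rewrite !ler_nat.
- exact: Hhom.
- apply/bigmax_leqP => K0 HK.
  case: (posnP #|K0|) => [-> //|Hne].
  have [w Hw Heq] := eq_bigmax_cond lN Hne.
  set t := \max_(u in K0) lN u in Heq.
  have Hall : forall u, u \in K0 -> ct u t.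
    move=> u Hu; apply/andP; split; first by rewrite /t; apply: leq_bigmax_cond.
    rewrite Heq; case: (eqVneq u w) => [-> //|Huw].
    move/forallP: HK => /(_ u); rewrite Hu /= => /forallP /(_ w); rewrite Hw Huw /=.
    by case/and3P.
  have Ht : t < M by apply: (Hctlt w); exact: Hall.
  pose colo (u : U) : 'I_K := (val u).1.
  have Hinj : {in K0 &, injective colo}.
    move=> u1 u2 H1 H2 E; apply: (Huniq _ _ t); [by rewrite /col; move: E; rewrite /colo => -> | exact: Hall | exact: Hall].
  rewrite -(card_in_imset Hinj).
  apply: (@leq_trans #|[set (inord (c v) : 'I_K) | v in nth set0 s t]|).
    apply: subset_leq_card; apply/subsetP => x /imsetP [u Hu ->].
    have /existsP [v /andP[/eqP Hcv Hv]] := Hcovt _ _ (Hall _ Hu).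
    apply/imsetP; exists v => //; apply: val_inj; by rewrite /= inordK // Hcv.
  apply: leq_trans (leq_imset_card _ _) _.
  by apply: leq_bigmax_seq => //; apply: mem_nth.
- rewrite /num_colors; apply: perm_size; apply: uniq_perm; try exact: undup_uniq.
  move=> x; rewrite !mem_undup; apply/mapP/mapP => [[u _ ->] | [v _ ->]].
    have /existsP [v /andP[/eqP Hcv _]] := Hcovu u.
    by exists v; rewrite ?mem_enum.
  by exists (f v); rewrite ?mem_enum // Hcolf.
- case=> Hp [Hpos Hw]; split; [|split].
  + move=> u w /and3P[Hne H1 H2]; apply/negP => /eqP Hc.
    have Hu : ct u (maxn (lN u) (lN w)) by have := HlNr u; rewrite /ct; lia.
    have Hw' : ct w (maxn (lN u) (lN w)) by have := HlNr w; rewrite /ct; lia.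
    by rewrite (Huniq _ _ _ Hc Hu Hw') eqxx in Hne.
  + move=> u; have /existsP [v /andP[/eqP Hcv _]] := Hcovu u.
    by rewrite -Hcv.
  + move=> u j Hj; have /existsP [v /andP[/eqP Hcv Hv]] := Hcovu u.
    have Hfv : f v = u.
      apply: (Huniq _ _ (lN u)); first by rewrite Hcolf.
        exact: Hfct.
      by rewrite /ct leqnn HlNr.
    rewrite -Hcv in Hj; have [w [Hvw Hcw]] := Hw v j Hj.
    exists (f w); split; first by rewrite -Hfv; exact: Hhom.
    by rewrite Hcolf.
Qed.

Theorem theorem3 (R : realType) (T : finType) (e : rel T) (p : nat) :
  simple_graph e -> is_pathwidth e p ->
  exists (U : finType) (h : rel U) (f : T -> U),
    [/\ interval_graph R h, graph_hom e h f,
        clique_number h <= p.+1 & FF e <= FF h].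
Proof.
move=> [_ Hirr] [[s Hpd Hw] _].
have Hmax : \max_(B <- s) #|B| <= p.+1 by rewrite -Hw /pd_width; lia.
case: (posnP (FF e)) => [H0 | Hpos].
  have Hprop : forall u v, e u v -> (enum_rank u : nat) != enum_rank v.
    move=> u v Huv; apply/negP => /eqP E.
    have E' : u = v by apply: enum_rank_inj; apply: val_inj.
    by rewrite E' Hirr in Huv.
  have [U [h [f [cH [H1 H2 H3 _ _]]]]] := build R Hpd Hprop.
  exists U, h, f; split => //; [exact: leq_trans H3 Hmax | by rewrite H0].
pose P := fun k : 'I_#|T|.+1 => `[< exists c : T -> nat, first_fit e c /\ num_colors c = k >].
have Hne : 0 < #|[pred k | P k]|.
  rewrite lt0n; apply/negP => /eqP Hc.
  move: Hpos; rewrite /FF big_pred0 // => k.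
  by move: Hc => /card0_eq Hk; have := Hk k; rewrite !inE.
have [k0 Hk0 Heq] := eq_bigmax_cond (fun k : 'I_#|T|.+1 => nat_of_ord k) Hne.
have HFF : FF e = k0.
  rewrite /FF -Heq; by apply: eq_bigl => k; rewrite inE.
rewrite inE /P in Hk0; have [c [Hc Hnc]] := asboolP _ Hk0.
have Hprop : forall u v, e u v -> c u != c v by case: Hc.
have [U [h [f [cH [H1 H2 H3 H4 H5]]]]] := build R Hpd Hprop.
exists U, h, f; split => //; first exact: leq_trans H3 Hmax.
have Hle : num_colors cH < #|U|.+1.
  rewrite ltnS /num_colors cardE; apply: leq_trans (size_undup _) _.
  by rewrite size_map.
rewrite HFF -Hnc -H4 /FF.
apply: (@leq_bigmax_cond _ _ (fun k : 'I_#|U|.+1 => nat_of_ord k) (Ordinal Hle)).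
by apply/asboolP; exists cH; split => //; apply: H5.
Qed.
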